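(* Let $b\in L^1_{\mathrm{loc}}(\mathbb{R}^n)$. Suppose there is a constant $C_b$ such that every $h^1$ atom $a$ satisfies $$\Big|\int ab\Big|\le\min\Big\{C_b,\ \frac{C_b\log 2}{\log(1+r^{-1})}\Big\},$$ where $r$ is the radius of the ball containing the support of $a$. Then $b\in\mathrm{lmo}(\mathbb{R}^n)$, with $\|b\|_{\mathrm{lmo}}\lesssim C_b$.
   Context: An $h^1$ atom: a function $a$ supported in a ball $B(x_0,r)$ with $\|a\|_{L^2}\le|B(x_0,r)|^{-1/2}$ and $|\int a|\le[\log(1+r^{-1})]^{-1}$. For a ball $B$, $b_B=\frac1{|B|}\int_Bb$. $\mathrm{LMO}_{\mathrm{loc}}$: $b\in L^1_{\mathrm{loc}}$ with $\|b\|_{\mathrm{LMO}_{\mathrm{loc}}}:=\sup_{r(B)<1}\frac{\log(1+r(B)^{-1})}{|B|}\int_B|b-b_B|<\infty$. $\mathrm{lmo}(\mathbb{R}^n)$ is the set of $b$ with $\|b\|_{\mathrm{lmo}}:=\|b\|_{\mathrm{LMO}_{\mathrm{loc}}}+\sup_{r(B)\ge1}\frac1{|B|}\int_B|b|<\infty$ (this equals $\mathrm{LMO}_{\mathrm{loc}}\cap\mathrm{bmo}$). *)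

(* Defs.v *)
From HB Require Import structures.
From mathcomp Require Import all_boot all_order all_algebra.
From mathcomp Require Import all_classical all_reals all_analysis.
Set Implicit Arguments. Unset Strict Implicit. Unset Printing Implicit Defensive.
Import Order.TTheory GRing.Theory Num.Theory.
Import numFieldNormedType.Exports.
Local Open Scope classical_set_scope.
Local Open Scope ring_scope.

(* Euclidean space R^(n.+1), built as the iterated product
   (((R * R) * R) * ... * R) with n.+1 factors, carrying the iterated
   product sigma-algebra of the Borel sets of R. *)
Fixpoint Rsp (R : realType) (n : nat) : {d : measure_display & measurableType d} :=
  match n with
  | 0 => existT (fun d => measurableType d) _ (measurableTypeR R : measurableType _)
  | m.+1 => existT (fun d => measurableType d) _
              (((projT2 (Rsp R m)) * (measurableTypeR R))%type : measurableType _)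
  end.

Definition Rn (R : realType) (n : nat) : measurableType (projT1 (Rsp R n)) :=
  projT2 (Rsp R n).

Fixpoint leb (R : realType) (n : nat) : set (Rn R n) -> \bar R :=
  match n return set (Rn R n) -> \bar R with
  | 0 => @lebesgue_measure R
  | m.+1 => (@leb R m \x @lebesgue_measure R)%E
  end.

Fixpoint dist2 (R : realType) (n : nat) : Rn R n -> Rn R n -> R :=
  match n return Rn R n -> Rn R n -> R with
  | 0 => fun x y => (x - y) ^+ 2
  | m.+1 => fun x y => @dist2 R m x.1 y.1 + (x.2 - y.2) ^+ 2
  end.

Definition eball (R : realType) (n : nat) (x : Rn R n) (r : R) : set (Rn R n) :=
  [set y | Num.sqrt (dist2 x y) < r].

Definition vol (R : realType) (n : nat) (B : set (Rn R n)) : R := fine (@leb R n B).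

Definition avg (R : realType) (n : nat) (B : set (Rn R n)) (b : Rn R n -> R) : R :=
  fine (\int[@leb R n]_(y in B) (b y)%:E)%E / vol B.

Definition loc_integrable_Rn (R : realType) (n : nat) (b : Rn R n -> R) : Prop :=
  forall (x : Rn R n) (r : R), 0 < r -> (@leb R n).-integrable (eball x r) (EFin \o b).

Definition h1_atom (R : realType) (n : nat) (a : Rn R n -> R) (x0 : Rn R n) (r : R) : Prop :=
  [/\ 0 < r,
      measurable_fun setT a,
      (forall y, ~ eball x0 r y -> a y = 0),
      (* ||a||_{L^2} <= |B|^{-1/2}, i.e. ||a||_{L^2}^2 <= |B|^{-1} *)
      (\int[@leb R n]_y ((a y) ^+ 2)%:E <= ((vol (eball x0 r))^-1)%:E)%E &
      `| fine (\int[@leb R n]_y (a y)%:E)%E | <= (ln (1 + r^-1))^-1 ].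

Definition lmo_norm (R : realType) (n : nat) (b : Rn R n -> R) : \bar R :=
  (ereal_sup [set ((ln (1 + r^-1) / vol (eball x r)) *
                   fine (\int[@leb R n]_(y in eball x r) `|b y - avg (eball x r) b|%:E)%E)%:E
             | x in [set: Rn R n] & r in [set r : R | (0 < r < 1)%R]]
   + ereal_sup [set ((vol (eball x r))^-1 *
                   fine (\int[@leb R n]_(y in eball x r) `|b y|%:E)%E)%:E
             | x in [set: Rn R n] & r in [set r : R | (1 <= r)%R]])%E.

(* Main.v *)
Require Import Defs.
From HB Require Import structures.
From mathcomp Require Import all_boot all_order all_algebra.
From mathcomp Require Import all_classical all_reals all_analysis.
From mathcomp Require Import measurable_realfun lebesgue_Rintegral.
From mathcomp.algebra_tactics Require Import ring lra.
Import Order.TTheory GRing.Theory Num.Theory.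
Local Open Scope classical_set_scope.
Local Open Scope ring_scope.

Module Helpers.
Set Implicit Arguments. Unset Strict Implicit. Unset Printing Implicit Defensive.
Import numFieldNormedType.Exports.
Fixpoint lebM (R : realType) (n : nat) : {measure set (Rn R n) -> \bar R} :=
  match n return {measure set (Rn R n) -> \bar R} with
  | 0 => @lebesgue_measure R
  | m.+1 => ((@lebM R m) \x (@lebesgue_measure R))%E
  end.

Lemma lebME (R : realType) (n : nat) : @leb R n = @lebM R n.
Proof.
elim: n => [//|m IH] /=.
by rewrite IH.
Qed.

Lemma measurable_dist2 (R : realType) (n : nat) (x : Rn R n) :
  measurable_fun setT (@dist2 R n x).
Proof.
elim: n x => [|m IH] x /=.
  by apply: measurable_funX; apply: measurable_funB.
apply: (measurable_funD (f := fun y : Rn R m.+1 => dist2 x.1 y.1) (g := fun y : Rn R m.+1 => (x.2 - y.2)^+2)).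
  exact: (measurableT_comp (IH x.1) measurable_fst).
apply: (measurableT_comp (f := fun t : R => (x.2 - t)^+2) (g := snd)); last exact: measurable_snd.
by apply: measurable_funX; apply: measurable_funB.
Qed.

Lemma measurable_eball (R : realType) (n : nat) (x : Rn R n) (r : R) :
  measurable (eball x r).
Proof.
have -> : eball x r = (fun y => Num.sqrt (dist2 x y)) @^-1` `]-oo, r[.
  by apply/seteqP; split => y /=; rewrite in_itv /=.
rewrite -[X in measurable X]setTI.
apply: (measurableT_comp _ (measurable_dist2 x)) => //.
exact: continuous_measurable_fun (@sqrt_continuous R).
Qed.

Section gen.
Context d (T : measurableType d) (R : realType) (mu : {measure set T -> \bar R}).

Lemma bdd_int D (g f : T -> R) (K : R) : measurable D -> measurable_fun D g ->
  (forall y, `|g y| <= K) -> mu.-integrable D (EFin \o f) ->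
  mu.-integrable D (fun y => (g y * f y)%:E).
Proof.
move=> mD mg gK fi.
have : mu.-integrable D ((EFin \o g) \* (EFin \o f))%E.
  apply: (integrableMr mD mg _ fi).
  rewrite /bounded_near /prop_near1 /pinfty_nbhs /=.
  exists K; split; first exact: (@Num.Theory.num_real R K).
  move=> M KM y _; apply: (le_trans (gK y)); exact: ltW.
by apply: (eq_integrable mD) => y _ /=; rewrite EFinM.
Qed.

Variables (B : set T) (mB : measurable B).
Let V := fine (mu B).
Hypothesis V0 : 0 < V.

Lemma muBE : mu B = V%:E.
Proof.
move: V0; rewrite /V; have := measure_ge0 mu B.
by case: (mu B) => [x| |] //=; rewrite ltxx.
Qed.

Lemma int1 : mu.-integrable B (fun _ => 1%:E).
Proof.
apply/integrableP; split; first exact: measurable_cst.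
under eq_integral do rewrite abse1.
by rewrite integral_cst// muBE mul1e ltry.
Qed.

Lemma int_bdd (g : T -> R) (K : R) : measurable_fun B g ->
  (forall y, `|g y| <= K) -> mu.-integrable B (EFin \o g).
Proof.
move=> mg gK; have := bdd_int (f := fun _ => 1) mB mg gK int1.
by apply: (eq_integrable mB) => y _ /=; rewrite mulr1.
Qed.

Section atom.
Variables (g : T -> R) (mg : measurable_fun setT g) (g1 : forall y, `|g y| <= 1).
Let a := (fun y => g y / V) \_ B.

Lemma atom_meas : measurable_fun setT a.
Proof.
apply/(measurable_restrictT _ mB).
by apply: measurable_funM; [exact: measurable_funTS|exact: measurable_cst].
Qed.

Lemma atom_supp y : ~ B y -> a y = 0.
Proof. by move=> By; rewrite /a /patch; case: ifPn => // /set_mem. Qed.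

Lemma atom_L2 : (\int[mu]_y ((a y) ^+ 2)%:E <= (V^-1)%:E)%E.
Proof.
have -> : (fun y => ((a y) ^+ 2)%:E) = (fun y => ((g y / V) ^+ 2)%:E) \_ B.
  by apply/funext => y; rewrite /a /patch; case: ifPn => //; rewrite expr2 mulr0.
rewrite -integral_mkcond.
apply: (@le_trans _ _ (\int[mu]_(y in B) (cst (V^-1 ^+ 2)%:E) y)%E).
  apply: ge0_le_integral => //.
  - by move=> y _; rewrite lee_fin sqr_ge0.
  - apply/measurable_EFinP; apply: measurable_funX.
    by apply: measurable_funM; [exact: measurable_funTS|exact: measurable_cst].
  - move=> y _; rewrite lee_fin.
    have := g1 y; rewrite ler_norml => /andP[h1 h2].
    have Vi : 0 < V^-1 by rewrite invr_gt0.
    rewrite mulrC exprMn; apply: ler_piMr; first exact: sqr_ge0.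
    nra.
rewrite integral_cst// muBE -EFinM lee_fin.
have VN : V != 0 by rewrite gt_eqF.
by rewrite expr2 -mulrA mulVf// mulr1.
Qed.

Lemma atom_int (b : T -> R) : mu.-integrable B (EFin \o b) ->
  mu.-integrable setT (fun y => (a y * b y)%:E).
Proof.
move=> bi.
have -> : (fun y => (a y * b y)%:E) = (fun y => (g y / V * b y)%:E) \_ B.
  by apply/funext => y; rewrite /a /patch; case: ifPn => //; rewrite mul0r.
apply/(integrable_mkcond _ mB).
apply: (bdd_int (K := V^-1)) => //.
  by apply: measurable_funM; [exact: measurable_funTS|exact: measurable_cst].
move=> y; have Vi : 0 <= V^-1 by rewrite invr_ge0 ltW.
rewrite normrM (ger0_norm Vi); exact: ler_piMl.
Qed.

Lemma atom_Rint (b : T -> R) :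
  Rintegral mu setT (fun y => a y * b y) = Rintegral mu B (fun y => g y / V * b y).
Proof.
rewrite [RHS]Rintegral_mkcond; congr Rintegral; apply/funext => y.
by rewrite /a /patch; case: ifPn => //; rewrite mul0r.
Qed.

Lemma atom_Rint1 : Rintegral mu setT a = Rintegral mu B (fun y => g y / V).
Proof. by rewrite [RHS]Rintegral_mkcond. Qed.

End atom.

Lemma Rint_bdd (g : T -> R) (K : R) : measurable_fun B g ->
  (forall y, `|g y| <= K) -> `|Rintegral mu B g| <= K * V.
Proof.
move=> mg gK.
have gi := int_bdd mg gK.
apply: (le_trans (le_normr_Rintegral mB gi)).
have -> : K * V = Rintegral mu B (fun _ => K) by rewrite Rintegral_cst.
apply: le_Rintegral => //.
- apply: (int_bdd (K := K)).
    exact: (measurableT_comp (@normr_measurable R setT) mg).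
  by move=> y; rewrite normr_id.
- apply: (int_bdd (K := `|K|)) => //; exact: measurable_cst.
Qed.

Lemma intZ (h : T -> R) k : mu.-integrable B (EFin \o h) ->
  mu.-integrable B (EFin \o (fun y => k * h y)).
Proof.
by move=> hi; apply: (eq_integrable mB _ _ _ (integrableZl mB k hi)) => y _ /=; rewrite EFinM.
Qed.

Lemma intD (h1 h2 : T -> R) : mu.-integrable B (EFin \o h1) ->
  mu.-integrable B (EFin \o h2) ->
  mu.-integrable B (EFin \o (fun y => h1 y + h2 y)).
Proof.
by move=> i1 i2; apply: (eq_integrable mB _ _ _ (integrableD mB i1 i2)) => y _ /=; rewrite EFinD.
Qed.

Lemma intB (h1 h2 : T -> R) : mu.-integrable B (EFin \o h1) ->
  mu.-integrable B (EFin \o h2) ->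
  mu.-integrable B (EFin \o (fun y => h1 y - h2 y)).
Proof.
by move=> i1 i2; apply: (eq_integrable mB _ _ _ (integrableB mB i1 i2)) => y _ /=; rewrite EFinB.
Qed.

Variables (b : T -> R) (bi : mu.-integrable B (EFin \o b)).

Let mb : measurable_fun B b.
Proof. exact/measurable_EFinP/(measurable_int mu bi). Qed.

Let S (c : R) := B `&` [set y | c <= b y].
Let fs (c : R) := fun y => (\1_(S c) y : R) * 2 - 1.

Let mS c : measurable (S c).
Proof.
have -> : S c = B `&` b @^-1` `[c, +oo[.
  by apply/seteqP; split => y [By /=]; rewrite ?in_itv /= ?andbT.
exact: mb.
Qed.

Let mfs c : measurable_fun setT (fs c).
Proof.
apply: measurable_funB; last exact: measurable_cst.
apply: measurable_funM; last exact: measurable_cst.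
exact: measurable_indic.
Qed.

Let fs1 c y : `|fs c y| <= 1.
Proof.
rewrite /fs indicE; case: (y \in S c); rewrite /= ?mulr1n ?mulr0n;
  rewrite ler_norml; apply/andP; split; lra.
Qed.

Let fsE c y : B y -> fs c y * (b y - c) = `|b y - c|.
Proof.
move=> By; rewrite /fs indicE.
have [cb|bc] := leP c (b y).
  have -> : y \in S c by rewrite in_setE.
  rewrite /= (ger0_norm _); last by rewrite subr_ge0.
  ring.
have -> : y \in S c = false.
  by apply/negbTE/negP; rewrite in_setE => -[_ /=]; rewrite leNgt bc.
rewrite /= (ltr0_norm _); last by rewrite subr_lt0.
ring.
Qed.

Variables (K M : R).
Hypothesis H : forall a : T -> R, measurable_fun setT a ->
  (forall y, ~ B y -> a y = 0) ->
  (\int[mu]_y ((a y) ^+ 2)%:E <= (V^-1)%:E)%E ->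
  `|Rintegral mu setT a| <= K ->
  mu.-integrable setT (fun y => (a y * b y)%:E) ->
  `|Rintegral mu setT (fun y => a y * b y)| <= M.

Lemma large_ball : 1 <= K -> Rintegral mu B (fun y => `|b y|) / V <= M.
Proof.
move=> K1; set f := fs 0.
have VN : V != 0 by rewrite gt_eqF.
have := H (a := (fun y => f y / V) \_ B) (atom_meas (mfs 0)) (@atom_supp f)
  (atom_L2 (mfs 0) (fs1 0)).
rewrite atom_Rint1 atom_Rint.
have hK : `|Rintegral mu B (fun y => f y / V)| <= K.
  apply: le_trans K1.
  have mfV : measurable_fun B (fun y => f y / V).
    exact: (measurable_funM (measurable_funTS (mfs 0)) (measurable_cst _)).
  have bd : forall y, `|f y / V| <= V^-1.
    move=> y; have Vi : 0 <= V^-1 by rewrite invr_ge0 ltW.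
    rewrite normrM (ger0_norm Vi); apply: ler_piMl => //; exact: fs1.
  by have := Rint_bdd mfV bd; rewrite mulVf.
move=> /(_ hK (atom_int (mfs 0) (fs1 0) bi)).
have -> : Rintegral mu B (fun y => f y / V * b y) =
    Rintegral mu B (fun y => `|b y|) / V.
  rewrite -RintegralZr//; last exact: integrable_norm.
  apply: eq_Rintegral => y /set_mem By.
  by rewrite -(subr0 (b y)) -(fsE 0 By) /f subr0; ring.
move=> h; apply: le_trans h.
rewrite ger0_norm // divr_ge0 ?Rintegral_ge0 //; last exact: ltW.
Qed.

Lemma small_ball : 0 <= K ->
  Rintegral mu B (fun y => `|b y - Rintegral mu B b / V|) / (2 * V) <= M.
Proof.
move=> K0.
have VN : V != 0 by rewrite gt_eqF.
set c := Rintegral mu B b / V.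
set f := fs c.
have mf : measurable_fun B f by exact: (measurable_funTS (mfs c)).
have fi : mu.-integrable B (EFin \o f) := int_bdd mf (fs1 c).
set m := Rintegral mu B f / V.
have m1 : `|m| <= 1.
  have Vi : 0 <= V^-1 by rewrite invr_ge0 ltW.
  rewrite /m normrM (ger0_norm Vi) ler_pdivrMr// mul1r.
  by have := Rint_bdd mf (fs1 c); rewrite mul1r.
set g := fun y => (f y - m) / 2.
have mg : measurable_fun setT g.
  apply: measurable_funM; last exact: measurable_cst.
  by apply: measurable_funB; [exact: mfs|exact: measurable_cst].
have g1 y : `|g y| <= 1.
  have := fs1 c y; rewrite -/f => h.
  rewrite /g normrM (ger0_norm (_ : (0:R) <= 2^-1)) ?invr_ge0//.
  rewrite ler_pdivrMr//; rewrite mul1r.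
  apply: (le_trans (ler_normB _ _)).
  apply: (le_trans (lerD h m1)); lra.
have RBf : Rintegral mu B f = m * V by rewrite /m divfK.
have RBb : Rintegral mu B b = c * V by rewrite /c divfK.
have ci : mu.-integrable B (EFin \o (fun _ : T => c)).
  by apply: (int_bdd (K := `|c|)) => //; exact: measurable_cst.
have bci : mu.-integrable B (EFin \o (fun y => `|b y - c|)).
  exact: (integrable_norm (intB bi ci)).
have := H (a := (fun y => g y / V) \_ B) (atom_meas mg) (@atom_supp g)
  (atom_L2 mg g1).
rewrite atom_Rint1 atom_Rint.
set k := (2 * V)^-1.
have -> : Rintegral mu B (fun y => g y / V) = 0.
  have -> : Rintegral mu B (fun y => g y / V) =
            Rintegral mu B (fun y => k * f y - k * m).
    apply: eq_Rintegral => y _; rewrite /g /k invfM; ring.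
  rewrite RintegralB //.
  - rewrite RintegralZl // Rintegral_cst // RBf -/V; ring.
  - exact: intZ.
  - apply: (int_bdd (K := `|k * m|)) => //; exact: measurable_cst.
rewrite normr0 => /(_ K0 (atom_int mg g1 bi)).
have -> : Rintegral mu B (fun y => g y / V * b y) =
    Rintegral mu B (fun y => `|b y - c|) / (2 * V).
  have -> : Rintegral mu B (fun y => g y / V * b y) =
      Rintegral mu B (fun y => k * `|b y - c| + (k * c) * f y - (k * m) * b y).
    apply: eq_Rintegral => y /set_mem By.
    rewrite -(fsE c By) /g /k invfM -/f; ring.
  have i1 := intZ k bci.
  have i2 := intZ (k * c) fi.
  have i3 := intZ (k * m) bi.
  have i12 := intD i1 i2.
  rewrite RintegralB // RintegralD // !RintegralZl // RBf RBb /k; ring.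
move=> h; apply: le_trans h.
rewrite ger0_norm // divr_ge0 ?Rintegral_ge0 //.
- by rewrite mulr_ge0 // ltW.
Qed.

End gen.

End Helpers.
Import Helpers.

(* The ambient space is R^(n.+1) (dimension n.+1 >= 1). *)
Theorem mainTheorem10 (R : realType) (n : nat) :
  exists C : R, 0 < C /\
  forall (b : Rn R n -> R) (Cb : R),
    loc_integrable_Rn b ->
    (forall (a : Rn R n -> R) (x0 : Rn R n) (r : R),
        h1_atom a x0 r ->
        (@leb R n).-integrable setT (fun y => (a y * b y)%:E) ->
        `| fine (\int[@leb R n]_y (a y * b y)%:E)%E |
          <= Num.min Cb (Cb * ln 2 / ln (1 + r^-1))) ->
    (lmo_norm b <= (C * Cb)%:E)%E.
Proof.
have ln2 : 0 < ln (2:R) by apply: ln_gt0; lra.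
exists (1 + 2 * ln 2); split; first lra.
move=> b Cb bloc Hb.
have E := lebME R n.
rewrite /loc_integrable_Rn E in bloc.
rewrite /h1_atom /vol E in Hb.
rewrite /lmo_norm /avg /vol E.
have mB := @measurable_eball R n.
have Cb0 : 0 <= Cb.
  have : `|fine (\int[lebM R n]_y ((0:R) * b y)%:E)%E| <=
         Num.min Cb (Cb * ln 2 / ln (1 + 1^-1)).
    apply: (Hb (fun _ => 0) point 1).
      split => //=.
      - rewrite integral0_eq => [|y _]; last by rewrite expr2 mulr0.
        by rewrite lee_fin invr_ge0 fine_ge0 // measure_ge0.
      - rewrite integral0_eq //= normr0 invr_ge0 ltW // ln_gt0 // invr1; lra.
    apply: (eq_integrable measurableT (cst 0%E)) => [y _|]; first by rewrite /= mul0r.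
    exact: integrable0.
  rewrite integral0_eq => [|y _]; last by rewrite mul0r.
  by rewrite /= normr0 le_min => /andP[].
have -> : (1 + 2 * ln 2) * Cb = 2 * ln 2 * Cb + Cb by ring.
rewrite EFinD; apply: leeD.
- apply: ge_ereal_sup => _ [x _ [r /= /andP[r0 r1] <-]].
  rewrite lee_fin.
  set V := fine (lebM R n (eball x r)).
  have [V0|V0] : V = 0 \/ 0 < V.
    have := fine_ge0 (measure_ge0 (lebM R n) (eball x r)).
    by rewrite -/V le_eqVlt => /predU1P[<-|]; [left|right].
    rewrite V0 invr0 mulr0 mul0r.
    by apply: mulr_ge0 => //; apply: mulr_ge0 => //; exact: ltW.
  set L := ln (1 + r^-1).
  have L0 : 0 < L by apply: ln_gt0; rewrite ltrDl invr_gt0.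
  have H : forall a : Rn R n -> R, measurable_fun setT a -> (forall y, ~ eball x r y -> a y = 0) ->
      (\int[lebM R n]_y ((a y)^+2)%:E <= (V^-1)%:E)%E ->
      `|Rintegral (lebM R n) setT a| <= L^-1 ->
      (lebM R n).-integrable setT (fun y => (a y * b y)%:E) ->
      `|Rintegral (lebM R n) setT (fun y => a y * b y)| <= Cb * ln 2 / L.
    move=> a ma sa L2 ia iab.
    apply: le_trans (Hb a x r (And5 r0 ma sa L2 ia) iab) _.
    by rewrite ge_min lexx orbT.
  have iL : 0 <= L^-1 by rewrite invr_ge0 ltW.
  have h := small_ball (mB x r) V0 (bloc x r r0) H iL.
  pose X := Rintegral (lebM R n) (eball x r)
     (fun y => `|b y - Rintegral (lebM R n) (eball x r) b / V|).
  change (L / V * X <= 2 * ln 2 * Cb).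
  have VN : V != 0 by rewrite gt_eqF.
  have LN : L != 0 by rewrite gt_eqF.
  have h2 := ler_wpM2l (_ : 0 <= 2 * L) h.
  have e1 : 2 * L * (X / (2 * V)) = L / V * X by field.
  have e2 : 2 * L * (Cb * ln 2 / L) = 2 * ln 2 * Cb by field.
  rewrite -e1 -e2; apply: h2; apply: mulr_ge0 => //; exact: ltW.
- apply: ge_ereal_sup => _ [x _ [r /= r1 <-]].
  rewrite lee_fin.
  set V := fine (lebM R n (eball x r)).
  have [V0|V0] : V = 0 \/ 0 < V.
    have := fine_ge0 (measure_ge0 (lebM R n) (eball x r)).
    by rewrite -/V le_eqVlt => /predU1P[<-|]; [left|right].
    by rewrite V0 invr0 mul0r.
  have r0 : 0 < r by lra.
  set L := ln (1 + r^-1).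
  have L0 : 0 < L by apply: ln_gt0; rewrite ltrDl invr_gt0.
  have L1 : L <= 1.
    apply: (le_trans (le_ln1Dx _)).
      by apply: (lt_le_trans (_ : -1 < 0)); [lra|rewrite invr_ge0 ltW].
    by rewrite invf_le1.
  have H : forall a : Rn R n -> R, measurable_fun setT a -> (forall y, ~ eball x r y -> a y = 0) ->
      (\int[lebM R n]_y ((a y)^+2)%:E <= (V^-1)%:E)%E ->
      `|Rintegral (lebM R n) setT a| <= L^-1 ->
      (lebM R n).-integrable setT (fun y => (a y * b y)%:E) ->
      `|Rintegral (lebM R n) setT (fun y => a y * b y)| <= Cb.
    move=> a ma sa L2 ia iab.
    apply: le_trans (Hb a x r (And5 r0 ma sa L2 ia) iab) _.
    by rewrite ge_min lexx.
  have h := large_ball (mB x r) V0 (bloc x r r0) H _.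
  rewrite mulrC; apply: h.
  by rewrite invf_ge1.
Qed.
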